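(* Let $0\le\lambda_2\le1$ and let $\theta:[0,1]\to[0,1]$ be non-increasing with $\theta(t)=0$ for $t\in(\lambda_2,1]$ and $\theta(\lambda_2)>0$. Define, for $q\in(0,1]$, $$g(q)=\int_{\theta^{-1}(q)}^1\int_0^t\frac1t\cdot\frac{\min\{\theta(s),q\}^t}{q}\,\mathrm ds\,\mathrm dt,$$ where $\theta^{-1}(x)=\inf\{t\in[0,1]:\theta(t)<x\}$ (with $\inf\emptyset=1$) and $0^t=0$ for $t>0$. Then $g(q)\ge g(\theta(\lambda_2))$ for every $q\in(0,\theta(\lambda_2)]$. *)

(* Defs.v *)
From HB Require Import structures.
From mathcomp Require Import all_boot all_order all_algebra.
From mathcomp Require Import all_classical all_reals all_analysis.
Set Implicit Arguments. Unset Strict Implicit. Unset Printing Implicit Defensive.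
Import Order.TTheory GRing.Theory Num.Theory.
Import numFieldNormedType.Exports.
Local Open Scope classical_set_scope.
Local Open Scope ring_scope.

Definition theta_inv (R : realType) (theta : R -> R) (x : R) : R :=
  let S := [set t : R | 0 <= t <= 1 /\ theta t < x] in
  if `[< S !=set0 >] then inf S else 1.

(* g(q) = int_{theta^{-1}(q)}^1 int_0^t (1/t) * min(theta s, q)^t / q ds dt
   (Lebesgue integrals of nonnegative functions, valued in \bar R;
    powR satisfies 0 `^ t = 0 for t > 0) *)
Definition gfun (R : realType) (theta : R -> R) (q : R) : \bar R :=
  (\int[lebesgue_measure]_(t in `[theta_inv theta q, 1%R])
     ((t^-1 / q)%:E *
      \int[lebesgue_measure]_(s in `[0%R, t]) ((Order.min (theta s) q) `^ t)%:E))%E.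

(* Main.v *)
Require Import Defs.
From HB Require Import structures.
From mathcomp Require Import all_boot all_order all_algebra.
From mathcomp Require Import all_classical all_reals all_analysis measurable_realfun.
Import Order.TTheory GRing.Theory Num.Theory.
Import numFieldNormedType.Exports.
Local Open Scope classical_set_scope.
Local Open Scope ring_scope.

Lemma theta_inv_eq (R : realType) (lambda2 : R) (theta : R -> R)
  (hl0 : 0 <= lambda2) (hl1 : lambda2 <= 1)
  (hmono : forall s t, 0 <= s -> s <= t -> t <= 1 -> theta t <= theta s)
  (hzero : forall t, lambda2 < t <= 1 -> theta t = 0)
  q (hq : 0 < q <= theta lambda2) : theta_inv theta q = lambda2.
Proof.
case/andP: hq => q0 qT.
have SE : [set t : R | 0 <= t <= 1 /\ theta t < q] = [set` `]lambda2, 1]].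
  apply/seteqP; split => t /=.
  - move=> [/andP[t0 t1] tq]; rewrite in_itv /= t1 andbT.
    rewrite ltNge; apply/negP => tl.
    by move: (le_trans qT (hmono _ _ t0 tl hl1)); rewrite leNgt tq.
  - rewrite in_itv /= => /andP[lt t1]; split.
      by rewrite t1 andbT (le_trans hl0) // ltW.
    by rewrite hzero ?lt ?t1.
rewrite /theta_inv SE.
have [l1|] := ltP lambda2 1.
  have -> : `[< [set` `]lambda2, 1]] !=set0 >] = true.
    by apply/asboolP; exists 1; rewrite /= in_itv /= l1 lexx.
  by rewrite inf_itv // bnd_simp.
move=> l1.
have E : `[< [set` `]lambda2, 1]] !=set0 >] = false.
  apply: asboolF => -[x]; rewrite /= in_itv /= => /andP[a b].
  by move: (lt_le_trans (lt_le_trans a b) l1); rewrite ltxx.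
by rewrite E; apply/eqP; rewrite eq_le hl1 l1.
Qed.

Lemma inner_eq (R : realType) (lambda2 : R) (theta : R -> R)
  (hl0 : 0 <= lambda2) (hl1 : lambda2 <= 1)
  (hmono : forall s t, 0 <= s -> s <= t -> t <= 1 -> theta t <= theta s)
  (hzero : forall t, lambda2 < t <= 1 -> theta t = 0)
  q (hq : 0 < q <= theta lambda2) t (ht : lambda2 <= t <= 1) (t0 : t != 0) :
  (\int[lebesgue_measure]_(s in `[0%R, t]) ((Order.min (theta s) q) `^ t)%:E
   = ((q `^ t) * lambda2)%:E)%E.
Proof.
case/andP: hq => q0 qT; case/andP: ht => lt t1.
transitivity (\int[lebesgue_measure]_(s in `[0%R, t]) ((q `^ t) * \1_(`[0%R, lambda2]) s)%:E)%E.
  apply: eq_integral.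
  move=> s; rewrite inE /= in_itv /= => /andP[s0 st].
  rewrite indicE /=.
  have [sl|ls] := leP s lambda2.
    rewrite mem_set; last by rewrite /= in_itv /= s0 sl.
    by rewrite mulr1 (@min_r _ _ (theta s)) // (le_trans qT) // hmono.
  rewrite memNset; last by rewrite /= in_itv /= s0 leNgt ls.
  rewrite mulr0 hzero; last by rewrite ls (le_trans st).
  by rewrite (@min_l _ _ 0) ?ltW // powR0.
transitivity ((q `^ t)%:E * \int[lebesgue_measure]_(s in `[0%R, t]) (\1_(`[0%R, lambda2]) s)%:E)%E.
  have := @integralZl_indic _ _ _ (@lebesgue_measure R) `[0%R,t]%classic (measurable_itv _) (fun _ => `[0%R, lambda2]%classic) (q `^ t).
  apply => //; first by move=> h; move: (powR_ge0 q t); rewrite leNgt h.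
rewrite integral_indic //.
rewrite setIidl; last by move=> s /=; rewrite !in_itv /= => /andP[-> /le_trans]; apply.
have := lebesgue_measure_itv `[0%R, lambda2]. move=> /= ->.
rewrite lte_fin; case: ltP => l0; first by rewrite oppr0 addr0 -EFinM.
have -> : lambda2 = 0 by apply/eqP; rewrite eq_le hl0 l0.
by rewrite mulr0 mule0.
Qed.

Lemma h_meas (R : realType) (lambda2 q : R) (l0 : 0 < lambda2) (q0 : 0 < q) :
  measurable_fun `[lambda2, 1%R] (fun t : R => (t^-1 / q * (q `^ t * lambda2))%:E).
Proof.
apply/measurable_EFinP.
have sub : `[lambda2, 1%R]%classic `<=` `]0%R, +oo[%classic.
  by move=> t /=; rewrite !in_itv /= andbT => /andP[+ _]; apply: lt_le_trans.
suff H : measurable_fun (`]0%R, +oo[%classic : set R) (fun t : R => t^-1 / q * (q `^ t * lambda2)).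
  exact: (measurable_funS _ sub H).
apply: open_continuous_measurable_fun => //.
move=> x xin; have x0 : 0 < x by move: xin; rewrite inE /= in_itv /= andbT.
have qE : (fun t : R => t^-1 / q * (q `^ t * lambda2)) =
  (fun t => t^-1 / q * (expR (t * ln q) * lambda2)).
  by apply/funext => t; rewrite /powR gt_eqF.
rewrite qE.
change ({for x, continuous ((fun t : R => t^-1 / q) \* (fun t => expR (t * ln q) * lambda2))}).
apply: continuousM.
  change ({for x, continuous ((fun t : R => t^-1) \* (fun=> q^-1))}).
  apply: continuousM; last exact: cvg_cst.
  exact (@inv_continuous R x (lt0r_neq0 x0)).
change ({for x, continuous ((fun t : R => expR (t * ln q)) \* (fun=> lambda2))}).
apply: continuousM; last exact: cvg_cst.
exact (@continuous_comp _ _ _ (fun t : R => t * ln q) expR x (@mulrr_continuous R (ln q) x) (@continuous_expR R _)).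
Qed.

From mathcomp Require Import ring lra.

Theorem mainTheorem12 (R : realType) (lambda2 : R) (theta : R -> R)
  (hl0 : 0 <= lambda2) (hl1 : lambda2 <= 1)
  (hrange : forall t, 0 <= t <= 1 -> 0 <= theta t <= 1)
  (hmono : forall s t, 0 <= s -> s <= t -> t <= 1 -> theta t <= theta s)
  (hzero : forall t, lambda2 < t <= 1 -> theta t = 0)
  (hpos : 0 < theta lambda2) :
  forall q : R, 0 < q <= theta lambda2 ->
    (gfun theta (theta lambda2) <= gfun theta q)%E.
Proof.
move=> q hq.
have E q' : 0 < q' <= theta lambda2 -> gfun theta q' =
  (\int[lebesgue_measure]_(t in `[lambda2, 1%R]) (t^-1 / q' * (q' `^ t * lambda2))%:E)%E.
  move=> hq'; rewrite /gfun (@theta_inv_eq R lambda2 theta hl0 hl1 hmono hzero q' hq').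
  apply: eq_integral => t; rewrite inE /= in_itv /= => ht.
  have [->|t0] := eqVneq t 0; first by rewrite invr0 !mul0r mul0e.
  by rewrite (@inner_eq R lambda2 theta hl0 hl1 hmono hzero q' hq' t ht t0) -EFinM.
have hT : 0 < theta lambda2 <= theta lambda2 by rewrite hpos lexx.
rewrite (E _ hT) (E _ hq).
have [l0|l0] := eqVneq lambda2 0.
  have Z q' : (\int[lebesgue_measure]_(t in `[lambda2, 1%R]) (t^-1 / q' * (q' `^ t * lambda2))%:E = 0)%E.
    by apply: integral0_eq => t _; rewrite l0 !mulr0.
  by rewrite !Z.
have lp : 0 < lambda2 by rewrite lt0r l0 hl0.
case/andP: hq => q0 qT.
apply: ge0_le_integral => //.
- move=> t; rewrite /= in_itv /= => /andP[lt _]; rewrite lee_fin.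
  have t0 : 0 < t by apply: lt_le_trans lt.
  by rewrite !mulr_ge0 ?invr_ge0 ?powR_ge0 ?ltW.
- exact: h_meas.
- exact: h_meas.
move=> t; rewrite /= in_itv /= => /andP[lt t1]; rewrite lee_fin.
have t0 : 0 < t by apply: lt_le_trans lt.
set T := theta lambda2.
have key : T `^ t <= q `^ t * (T / q).
  have -> : T `^ t = q `^ t * (T / q) `^ t.
    by rewrite -powRM ?divr_ge0 ?ltW // mulrCA divff ?mulr1 // lt0r_neq0.
  apply: ler_wpM2l; first exact: powR_ge0.
  apply: ler1_powR => //.
  by rewrite ler_pdivlMr // mul1r.
apply: (@le_trans _ _ (t^-1 / T * (q `^ t * (T / q) * lambda2))).
  apply: ler_wpM2l; first by rewrite divr_ge0 ?invr_ge0 ?ltW.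
  by apply: ler_wpM2r; first exact: ltW.
have -> : t^-1 / T * (q `^ t * (T / q) * lambda2) = t^-1 / q * (q `^ t * lambda2).
  by field; rewrite !lt0r_neq0.
by [].
Qed.
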